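(* For every integer $k\ge1$, the monomials $u^iv^jw^{2k-i-j}$ occurring with nonzero coefficient in $P_{k/(k+1)}(u,v,w)$ are exactly those with $(i,j)\in\mathbb{Z}^2$, $i,j\ge0$, $\frac{i}{k}+\frac{j}{k+1}\ge1$ and $i+j\le 2k$.
   Context: Markov polynomials. Let $x,y,z$ be indeterminates. Consider the set consisting of all rationals $\rho\in[0,1]$, each written in lowest terms $\rho=a/b$ with integers $a\ge 0$, $b\ge 1$, together with the formal symbol $1/0$. Define Laurent polynomials $M_\rho(x,y,z)$ recursively by $M_{1/0}=y$, $M_{0/1}=x$, $M_{1/1}=\frac{x^2+y^2}{z}$, and: whenever $a/b$, $c/d$ are in this set with $|ad-bc|=1$ and $(a+2c)/(b+2d)\in[0,1]$, then $M_{\frac{a+2c}{b+2d}}=\big(M_{c/d}^2+M_{\frac{a+c}{b+d}}^2\big)/M_{a/b}$. This determines $M_\rho$ for every rational $\rho\in[0,1]$. Numerator. For coprime $1\le a\le b$, $P_{a/b}(u,v,w)$ denotes the homogeneous polynomial of degree $a+b-1$ such that $M_{a/b}(x,y,z)=P_{a/b}(x^2,y^2,z^2)/(x^{a-1}y^{b-1}z^{a+b-1})$; its existence is known. *)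

(* Defs.v *)
(* Markov polynomials as elements of the fraction field of
   Z[x,y,z] (multinomials' {mpoly int[3]}), which contains the Laurent
   polynomials in x, y, z. *)
From HB Require Import structures.
From mathcomp Require Import all_boot all_order all_algebra.
From mathcomp Require Import fraction.
From mathcomp Require Import mpoly.
Set Implicit Arguments. Unset Strict Implicit. Unset Printing Implicit Defensive.
Import Order.TTheory GRing.Theory Num.Theory.

Local Open Scope ring_scope.

Definition Poly3 := {mpoly int[3]}.
Definition Frac3 := {fraction Poly3}.

Definition i0 : 'I_3 := @Ordinal 3 0 isT.
Definition i1 : 'I_3 := @Ordinal 3 1 isT.
Definition i2 : 'I_3 := @Ordinal 3 2 isT.

Definition xF : Frac3 := tofrac ('X_i0 : Poly3).
Definition yF : Frac3 := tofrac ('X_i1 : Poly3).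
Definition zF : Frac3 := tofrac ('X_i2 : Poly3).

(* A rational a/b in [0,1] in lowest terms (a >= 0, b >= 1), or the formal
   symbol 1/0, represented by the pair (a, b). *)
Definition in_markov_set (a b : nat) : bool :=
  ((0 < b)%N && (a <= b)%N && coprime a b) || ((a == 1%N) && (b == 0%N)).

Definition farey_nbrs (a b c d : nat) : bool :=
  (a * d == b * c + 1)%N || (b * c == a * d + 1)%N.

(* M : nat -> nat -> Frac3, M a b standing for M_{a/b}, satisfies the
   recursive definition of the Markov polynomials. *)
Definition markov_family (M : nat -> nat -> Frac3) : Prop :=
  [/\ M 1%N 0%N = yF,
      M 0%N 1%N = xF,
      M 1%N 1%N = (xF ^+ 2 + yF ^+ 2) / zF &
      forall a b c d : nat,
        in_markov_set a b -> in_markov_set c d -> farey_nbrs a b c d ->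
        (a + 2 * c <= b + 2 * d)%N ->
        M (a + 2 * c)%N (b + 2 * d)%N
          = (M c d ^+ 2 + M (a + c)%N (b + d)%N ^+ 2) / M a b].

Definition subst_squares (P : Poly3) : Poly3 :=
  P \mPo [tuple ('X_i : Poly3) ^+ 2 | i < 3].

(* Main.v *)
Require Import Defs.
From HB Require Import structures.
From mathcomp Require Import all_boot all_order all_algebra.
From mathcomp Require Import fraction.
From mathcomp Require Import mpoly.
From mathcomp Require Import zify ring lra.
Import Order.TTheory GRing.Theory Num.Theory.
Local Open Scope ring_scope.

Definition Up : Poly3 := 'X_i0.
Definition Vp : Poly3 := 'X_i1.
Definition Wp : Poly3 := 'X_i2.

Fixpoint pq (k : nat) : Poly3 * Poly3 :=
  match k with
  | 0%N => (1, 0)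
  | k'.+1 => let: (p, q) := pq k' in
      ((Up + Vp) ^+ 2 * (p + q) + Up * Wp * p, Vp * Wp * (p + q))
  end.
Definition pk k := (pq k).1.
Definition qk k := (pq k).2.
Lemma pk0 : pk 0 = 1. Proof. by []. Qed.
Lemma qk0 : qk 0 = 0. Proof. by []. Qed.
Lemma pkS k : pk k.+1 = (Up + Vp) ^+ 2 * (pk k + qk k) + Up * Wp * pk k.
Proof. by rewrite /pk /qk /=; case: (pq k). Qed.
Lemma qkS k : qk k.+1 = Vp * Wp * (pk k + qk k).
Proof. by rewrite /pk /qk /=; case: (pq k). Qed.

Definition Tp := (Up + Vp) ^+ 2 + Up * Wp + Vp * Wp.
Definition Dp := Up * Vp * Wp ^+ 2.

Lemma pk_lin k : pk k.+2 = Tp * pk k.+1 - Dp * pk k.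
Proof.
rewrite [pk k.+2]pkS qkS [pk k.+1]pkS /Tp /Dp; ring.
Qed.

Lemma cassini k : pk k.+2 * pk k = pk k.+1 ^+ 2 + (Up + Vp) ^+ 2 * Dp ^+ k * (Vp * Wp).
Proof.
elim: k => [|k IH].
  rewrite pkS qkS pkS pk0 qk0; ring.
have e := pk_lin k.+1.
have e2 := pk_lin k.
have : pk k.+3 * pk k.+1 - pk k.+2 ^+ 2 = Dp * (pk k.+2 * pk k - pk k.+1 ^+ 2).
  rewrite e e2; ring.
rewrite IH => h.
have h' : pk k.+3 * pk k.+1 = pk k.+2 ^+ 2 + (pk k.+3 * pk k.+1 - pk k.+2 ^+ 2) by ring.
rewrite h' h [Dp ^+ k.+1]exprS.
ring.
Qed.

Lemma mcoeffMXif (p : Poly3) (e m : 'X_{1..3}) :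
  (p * 'X_[e])@_m = if (e <= m)%MM then p@_(m - e)%MM else 0.
Proof.
case: ifP => hle.
  by rewrite -{1}(submK hle) addmC mcoeffMX.
apply/eqP; rewrite mcoeff_eq0; apply/negP => hm.
rewrite (perm_mem (msuppMX p e)) in hm; case/mapP: hm => m' _ hm'.
by rewrite hm' lem_addr in hle.
Qed.

Lemma lemE (e m : 'X_{1..3}) :
  (e <= m)%MM = [&& (e i0 <= m i0)%N, (e i1 <= m i1)%N & (e i2 <= m i2)%N].
Proof.
apply/mnm_lepP/and3P => [h|[h0 h1 h2] i]; first by split; apply: h.
case: i => [[|[|[|n]]] hn] //.
- by have -> : Ordinal hn = i0 by apply: val_inj.
- by have -> : Ordinal hn = i1 by apply: val_inj.
- by have -> : Ordinal hn = i2 by apply: val_inj.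
Qed.

Definition e00 : 'X_{1..3} := (U_(i0) + U_(i0))%MM.
Definition e01 : 'X_{1..3} := (U_(i0) + U_(i1))%MM.
Definition e11 : 'X_{1..3} := (U_(i1) + U_(i1))%MM.
Definition e02 : 'X_{1..3} := (U_(i0) + U_(i2))%MM.
Definition e12 : 'X_{1..3} := (U_(i1) + U_(i2))%MM.

Lemma eval_e : [/\ [/\ e00 i0 = 2, e00 i1 = 0 & e00 i2 = 0]%N,
  [/\ e01 i0 = 1, e01 i1 = 1 & e01 i2 = 0]%N,
  [/\ e11 i0 = 0, e11 i1 = 2 & e11 i2 = 0]%N,
  [/\ e02 i0 = 1, e02 i1 = 0 & e02 i2 = 1]%N &
  [/\ e12 i0 = 0, e12 i1 = 1 & e12 i2 = 1]%N].
Proof. by rewrite /e00 /e01 /e11 /e02 /e12 !mnmDE !mnm1E. Qed.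

Lemma pkSX k : pk k.+1 = (pk k + qk k) * 'X_[e00] + (pk k + qk k) * 'X_[e01] *+ 2
   + (pk k + qk k) * 'X_[e11] + pk k * 'X_[e02].
Proof. rewrite /e00 /e01 /e11 /e02 !mpolyXD pkS /Up /Vp /Wp; ring. Qed.

Lemma qkSX k : qk k.+1 = (pk k + qk k) * 'X_[e12].
Proof. rewrite /e12 !mpolyXD qkS /Vp /Wp; ring. Qed.

Definition Pp k a b c : Prop := (a + b + c = 2*k /\ ((k < a+b) \/ ((a = k) /\ (b = 0))))%N.
Definition Pq k a b c : Prop := (a+b+c = 2*k /\ 0 < b /\ 0 < c /\ k <= a+b)%N.
Definition Pr k a b c := Pp k a b c \/ Pq k a b c.
Lemma stepQ k a b c : Pq k.+1 a b c <-> (0 < b /\ 0 < c /\ Pr k a (b-1) (c-1))%N.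
Proof. rewrite /Pr /Pp /Pq. split; lia. Qed.
Lemma stepP k a b c : Pp k.+1 a b c <->
  ((1 < a /\ Pr k (a - 2) b c) \/ (0 < a /\ 0 < b /\ Pr k (a-1) (b-1) c) \/
      (1 < b /\ Pr k a (b-2) c) \/ (0 < a /\ 0 < c /\ Pp k (a-1) b (c-1)))%N.
Proof. rewrite /Pr /Pp /Pq. split.
  move=> [hs [h|[ha hb]]]; last by right; right; right; lia.
  case: (ltnP 1 a) => ha.
    left; split => //.
    case: (ltnP k (a - 2 + b)) => h2; first by left; lia.
    case: (posnP b) => hb; first by left; lia.
    case: (posnP k) => hk; first by left; lia.
    by right; lia.
  case: (ltnP 1 b) => hb.
    right; right; left; split => //.
    case: (ltnP k (a + (b-2))) => h2; first by left; lia.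
    case: (posnP (b-2)) => hb2; first by left; lia.
    by right; lia.
  by right; left; lia.
case=> [[h1 [h|h]]|[[h1 [h2 [h|h]]]|[[h1 [h|h]]|[h1 [h2 h]]]]]; lia.
Qed.

Lemma ciP (e m : 'X_{1..3}) (p : Poly3) (P : nat -> nat -> nat -> Prop) :
  (forall x, 0 <= p@_x) -> (forall x, p@_x != 0 <-> P (x i0) (x i1) (x i2)) ->
  0 <= (p * 'X_[e])@_m /\
  ((p * 'X_[e])@_m != 0 <-> [/\ (e i0 <= m i0)%N, (e i1 <= m i1)%N, (e i2 <= m i2)%N &
        P (m i0 - e i0)%N (m i1 - e i1)%N (m i2 - e i2)%N]).
Proof.
move=> h0 hP; rewrite mcoeffMXif lemE; case: ifP => [/and3P [a b c]|hn].
  by split=> //; rewrite hP !mnmBE; split => // [[]].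
split=> //; rewrite eqxx; split => // [[a b c _]].
by rewrite a b c in hn.
Qed.

Lemma nz_add (x y : int) : 0 <= x -> 0 <= y -> (x + y != 0) <-> (x != 0 \/ y != 0).
Proof.
move=> hx hy; rewrite paddr_eq0 // negb_and; split; [by case/orP; auto | by case=> ->; rewrite ?orbT].
Qed.

Lemma eq0E (m : 'X_{1..3}) :
  (m == 0%MM) = [&& (m i0 == 0)%N, (m i1 == 0)%N & (m i2 == 0)%N].
Proof.
apply/eqP/and3P => [->|[h0 h1 h2]]; first by rewrite !mnm0E.
apply/mnmP => i; rewrite mnm0E.
case: i => [[|[|[|n]]] hn] //; apply/eqP.
- by have -> : Ordinal hn = i0 by apply: val_inj.
- by have -> : Ordinal hn = i1 by apply: val_inj.
- by have -> : Ordinal hn = i2 by apply: val_inj.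
Qed.

Lemma supp k : [/\ forall m, 0 <= (pk k)@_m, forall m, 0 <= (qk k)@_m,
  forall m, (pk k)@_m != 0 <-> Pp k (m i0) (m i1) (m i2) &
  forall m, (qk k)@_m != 0 <-> Pq k (m i0) (m i1) (m i2)].
Proof.
elim: k => [|k [hp0 hq0 hpP hqP]].
  split => m; rewrite ?pk0 ?qk0 ?mcoeff1 ?mcoeff0 //.
  - rewrite /Pp; case: (boolP (m == 0%MM)) => h; rewrite eq0E in h.
      case/and3P: h => /eqP -> /eqP -> /eqP ->; split => // _; split => //; by right.
    split; first by case/negP.
    case => hs _; case/and3P: h; split; apply/eqP; lia.
  - by rewrite eqxx /Pq; split => // ; lia.
have hr0 x : 0 <= (pk k + qk k)@_x by rewrite mcoeffD addr_ge0.
have hrP x : (pk k + qk k)@_x != 0 <-> Pr k (x i0) (x i1) (x i2).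
  by rewrite mcoeffD nz_add // hpP hqP.
have [[a0 a1 a2] [b0 b1 b2] [c0 c1 c2] [d0 d1 d2] [f0 f1 f2]] := eval_e.
split => m.
  rewrite pkSX !mcoeffD.
  have [hA _] := @ciP e00 m _ _ hr0 hrP; have [hB _] := @ciP e01 m _ _ hr0 hrP.
  have [hC _] := @ciP e11 m _ _ hr0 hrP; have [hD _] := @ciP e02 m _ _ hp0 hpP.
  by rewrite !addr_ge0.
- by rewrite qkSX; have [hA _] := @ciP e12 m _ _ hr0 hrP.
- rewrite pkSX !mcoeffD.
  have [hA hA'] := @ciP e00 m _ _ hr0 hrP; have [hB hB'] := @ciP e01 m _ _ hr0 hrP.
  have [hC hC'] := @ciP e11 m _ _ hr0 hrP; have [hD hD'] := @ciP e02 m _ _ hp0 hpP.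
  rewrite !nz_add ?addr_ge0 //.
  rewrite hA' hB' hC' hD' stepP a0 a1 a2 b0 b1 b2 c0 c1 c2 d0 d1 d2 !subn0.
  split.
    case=> [[[[h1 _ _ h]|[[h1 h2 _ h]|[h1 h2 _ h]]]|[_ h1 _ h]]|[h1 _ h2 h]].
    + by left.
    + by right; left.
    + by right; left.
    + by right; right; left.
    + by right; right; right.
  case=> [[h1 h]|[[h1 [h2 h]]|[[h1 h]|[h1 [h2 h]]]]].
  + by left; left; left; split.
  + by left; left; right; left; split.
  + by left; right; split.
  + by right; split.
- rewrite qkSX.
  have [hA hA'] := @ciP e12 m _ _ hr0 hrP.
  rewrite hA' stepQ f0 f1 f2 !subn0.
  split; first by case=> _ h1 h2 h.
  by case=> [h1 [h2 h]]; split.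
Qed.

Lemma mulm2_inj (a b : 'X_{1..3}) : ((a *+ 2)%MM == (b *+ 2)%MM) = (a == b).
Proof.
apply/eqP/eqP => [h|->] //; apply/mnmP => i.
have := congr1 (fun m : 'X_{1..3} => m i) h; rewrite /= !mulmnE; lia.
Qed.

Lemma X_subst (m : 'X_{1..3}) : subst_squares 'X_[m] = 'X_[(m *+ 2)%MM].
Proof.
rewrite /subst_squares comp_mpolyX -mpolyXn mpolyXE_id -prodrXl.
apply: eq_bigr => i _; rewrite tnth_mktuple -!exprM mulnC //.
Qed.

Lemma subst_coef (p : Poly3) (m : 'X_{1..3}) : (subst_squares p)@_(m *+ 2)%MM = p@_m.
Proof.
have -> : subst_squares p = \sum_(m' <- msupp p) p@_m' *: 'X_[(m' *+ 2)%MM].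
  rewrite /subst_squares comp_mpolyEX; apply: eq_bigr => m' _.
  by rewrite -X_subst.
transitivity ((\sum_(m' <- msupp p) p@_m' *: 'X_[m'])@_m); last by rewrite -mpolyE.
rewrite !raddf_sum; apply: eq_bigr => m' _.
by rewrite /= !mcoeffZ !mcoeffX mulm2_inj.
Qed.

Definition Fm (p : Poly3) : Frac3 := tofrac (subst_squares p).

Lemma FmM p q : Fm (p * q) = Fm p * Fm q.
Proof. by rewrite /Fm /subst_squares !rmorphM. Qed.
Lemma FmD p q : Fm (p + q) = Fm p + Fm q.
Proof. by rewrite /Fm /subst_squares !rmorphD. Qed.
Lemma FmX p n : Fm (p ^+ n) = Fm p ^+ n.
Proof. by rewrite /Fm /subst_squares !rmorphXn. Qed.
Lemma Fm1 : Fm 1 = 1.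
Proof. by rewrite /Fm /subst_squares !rmorph1. Qed.
Lemma FmU : Fm Up = xF ^+ 2.
Proof. by rewrite /Fm /subst_squares /Up comp_mpolyXU -tnth_nth tnth_mktuple rmorphXn. Qed.
Lemma FmV : Fm Vp = yF ^+ 2.
Proof. by rewrite /Fm /subst_squares /Vp comp_mpolyXU -tnth_nth tnth_mktuple rmorphXn. Qed.
Lemma FmW : Fm Wp = zF ^+ 2.
Proof. by rewrite /Fm /subst_squares /Wp comp_mpolyXU -tnth_nth tnth_mktuple rmorphXn. Qed.

Lemma Xneq0 (m : 'X_{1..3}) : ('X_[m] : Poly3) != 0.
Proof. by apply/eqP => h; have := mcoeffX int m m; rewrite h mcoeff0 eqxx. Qed.

Lemma xyz_neq0 : [/\ xF != 0, yF != 0 & zF != 0].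
Proof. by rewrite /xF /yF /zF !tofrac_eq0 !Xneq0. Qed.

Lemma Fpk_neq0 k : Fm (pk k) != 0.
Proof.
rewrite /Fm tofrac_eq0; apply/eqP => h.
pose m0 : 'X_{1..3} := (U_(i0) *+ k + U_(i2) *+ k)%MM.
have [_ _ hP _] := supp k.
have : (pk k)@_m0 != 0.
  apply/hP; rewrite /m0 !mnmDE !mulmnE !mnm1E /=; rewrite /Pp; split; [lia| right; lia].
by rewrite -subst_coef h mcoeff0 eqxx.
Qed.

Definition Gf : Frac3 := xF * yF * zF ^+ 2.

Lemma cassiniF k : Fm (pk k.+2) * Fm (pk k) = Fm (pk k.+1) ^+ 2 +
  (xF ^+ 2 + yF ^+ 2) ^+ 2 * (Gf ^+ k) ^+ 2 * (yF ^+ 2 * zF ^+ 2).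
Proof.
have := congr1 Fm (cassini k).
rewrite FmM => ->.
rewrite !(FmD, FmM, FmX) FmU FmV FmW.
rewrite [Gf ^+ k ^+ 2]exprAC /Gf !exprMn; ring.
Qed.

Lemma base_id (F : fieldType) (x y z : F) : x != 0 -> y != 0 -> z != 0 ->
 (x ^+ 2 + ((x ^+ 2 + y ^+ 2) / z) ^+ 2) / y =
  x * ((x ^+ 2 + y ^+ 2) ^+ 2 * (1 + 0) + x ^+ 2 * z ^+ 2 * 1) /
  (x * y * z ^+ 2) ^+ 1.
Proof. move=> nx ny nz. by field; rewrite ?nx ?ny ?nz. Qed.
Lemma step_id (F : fieldType) (x y z F0 F1 g : F) : x != 0 -> y != 0 -> z != 0 ->
  F0 != 0 -> g != 0 ->
  ((((x ^+ 2 + y ^+ 2) / z) ^+ 2 + (x * F1 / ((x * y * z ^+ 2) * g)) ^+ 2) / (x * F0 / g)) =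
  x * ((F1 ^+ 2 + (x ^+ 2 + y ^+ 2) ^+ 2 * g ^+ 2 * (y ^+ 2 * z ^+ 2)) / F0)
    / ((x * y * z ^+ 2) * ((x * y * z ^+ 2) * g)).
Proof. move=> nx ny nz n0 ng. by field; rewrite ?nx ?ny ?nz ?n0 ?ng. Qed.

Lemma Fm0 : Fm 0 = 0.
Proof. by rewrite /Fm /subst_squares !rmorph0. Qed.

Lemma Nform (M : nat -> nat -> Frac3) : markov_family M ->
  forall k, M k k.+1 = xF * Fm (pk k) / Gf ^+ k.
Proof.
case=> H10 H01 H11 H.
have [nx ny nz] := xyz_neq0.
suff: forall k, M k k.+1 = xF * Fm (pk k) / Gf ^+ k /\
                M k.+1 k.+2 = xF * Fm (pk k.+1) / Gf ^+ k.+1 by move=> h k; case: (h k).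
elim=> [|k [IH0 IH1]].
  split; first by rewrite H01 pk0 Fm1 expr0 mulr1 divr1.
  have := H 1 0 0 1 isT isT isT isT; rewrite /= H01 H11 H10 => ->.
  rewrite pkS pk0 qk0 !(FmD, FmM, FmX) FmU FmV FmW Fm1 Fm0 /Gf.
  exact: (@base_id _ xF yF zF nx ny nz).
split => //.
have hm1 : in_markov_set k k.+1 by rewrite /in_markov_set ltn0Sn leqnSn coprimenS.
have hf : farey_nbrs k k.+1 1 1 by rewrite /farey_nbrs; apply/orP; right; apply/eqP; lia.
have hl : (k + 2 * 1 <= k.+1 + 2 * 1)%N by lia.
have := H k k.+1 1 1 hm1 isT hf hl.
have -> : (k + 2 * 1 = k.+2)%N by lia.
have -> : (k.+1 + 2 * 1 = k.+3)%N by lia.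
have -> : (k + 1 = k.+1)%N by lia.
have -> : (k.+1 + 1 = k.+2)%N by lia.
move=> ->.
rewrite IH0 IH1 H11.
have hF0 := Fpk_neq0 k.
have hg : Gf ^+ k != 0.
  apply: expf_neq0; rewrite /Gf; apply: mulf_neq0; first exact: (mulf_neq0 nx ny).
  exact: (expf_neq0 2 nz).
have e2 : Fm (pk k.+2) = (Fm (pk k.+1) ^+ 2 +
  (xF ^+ 2 + yF ^+ 2) ^+ 2 * (Gf ^+ k) ^+ 2 * (yF ^+ 2 * zF ^+ 2)) / Fm (pk k).
  by rewrite -cassiniF (mulfK hF0).
rewrite e2 [Gf ^+ k.+1]exprS [Gf ^+ k.+2]exprS [Gf ^+ k.+1]exprS.
exact: (@step_id _ xF yF zF (Fm (pk k)) (Fm (pk k.+1)) (Gf ^+ k) nx ny nz hF0 hg).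
Qed.

Lemma nat_region (k a b : nat) : (1 <= k)%N ->
  (k * k.+1 <= k.+1 * a + k * b)%N <-> (k < a + b \/ (a = k /\ b = 0))%N.
Proof.
move=> hk; split => [h|].
  case: (ltnP k (a + b)) => hab; first by left.
  have : (k * (a + b) <= k * k)%N by rewrite leq_mul2l hab orbT.
  right; nia.
case=> [h|[-> ->]]; last by nia.
have : (k * k.+1 <= k * (a + b))%N by rewrite leq_mul2l h orbT.
nia.
Qed.

Lemma rat_region (k a b : nat) : (1 <= k)%N ->
  (1 <= a%:Q / k%:Q + b%:Q / k.+1%:Q) <-> (k * k.+1 <= k.+1 * a + k * b)%N.
Proof.
move=> hk.
rewrite -!pmulrn.
have hk0 : k%:R != 0 :> rat by rewrite pnatr_eq0; lia.
have hk1 : k.+1%:R != 0 :> rat by rewrite pnatr_eq0.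
have e : a%:R / k%:R + b%:R / k.+1%:R = (k.+1 * a + k * b)%N%:R / (k * k.+1)%N%:R :> rat.
  rewrite natrD !natrM; field; rewrite hk0 andbT addrC natr1; exact: hk1.
rewrite e ler_pdivlMr ?mul1r ?ler_nat //.
by rewrite ltr0n; lia.
Qed.

Lemma frac_cancel (F : fieldType) (a b x D G : F) : D != 0 -> G != 0 ->
  x * D = G -> a / D = x * b / G -> a = b.
Proof.
move=> nD nG hxD h.
have nx : x != 0 by apply/eqP => hx; move: nG; rewrite -hxD hx mul0r eqxx.
have := congr1 (fun t => t * D) h; rewrite /= (divfK nD) => ->.
by rewrite -hxD; field; rewrite nx nD.
Qed.

Theorem corollary5p4 (M : nat -> nat -> Frac3) (k : nat) (P : Poly3) :
  markov_family M ->
  (1 <= k)%N ->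
  P \is (2 * k)%N.-homog ->
  M k k.+1 = tofrac (subst_squares P)
             / (xF ^+ (k - 1) * yF ^+ k * zF ^+ (2 * k)) ->
  forall m : 'X_{1..3},
    (P@_m != 0) <->
    [/\ m i2 = (2 * k - m i0 - m i1)%N,
        1 <= (m i0)%:Q / k%:Q + (m i1)%:Q / k.+1%:Q &
        (m i0 + m i1 <= 2 * k)%N].
Proof.
move=> hM hk _ hP m.
have [nx ny nz] := xyz_neq0.
have hD : xF ^+ (k - 1) * yF ^+ k * zF ^+ (2 * k) != 0.
  apply: mulf_neq0; first exact: (mulf_neq0 (expf_neq0 _ nx) (expf_neq0 _ ny)).
  exact: (expf_neq0 _ nz).
have hG : Gf ^+ k != 0.
  apply: expf_neq0; rewrite /Gf; apply: mulf_neq0; first exact: (mulf_neq0 nx ny).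
  exact: (expf_neq0 2 nz).
have hxD : xF * (xF ^+ (k - 1) * yF ^+ k * zF ^+ (2 * k)) = Gf ^+ k.
  rewrite /Gf !exprMn mulnC exprM !mulrA -exprS.
  by have -> : (k - 1).+1 = k by lia.
have hPk : Fm P = Fm (pk k).
  apply: (@frac_cancel _ _ _ _ _ _ hD hG hxD).
  by rewrite /Fm -hP Nform.
have hcoef : P@_m = (pk k)@_m.
  move: hPk; rewrite /Fm => /eqP; rewrite tofrac_eq => /eqP hs.
  by rewrite -subst_coef hs subst_coef.
have [_ _ hpP _] := supp k.
rewrite hcoef hpP /Pp.
have hr := rat_region k (m i0) (m i1) hk.
have hn := nat_region k (m i0) (m i1) hk.
split.
  case=> hs hreg; split; [lia | apply/hr; apply/hn; exact: hreg | lia].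
case=> hs hq hl; split; [lia | apply/hn; apply/hr; exact: hq].
Qed.
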